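(* Let $\beta>0$ and let $L:(0,\infty)\to(0,\infty)$ be slowly varying at $\infty$ with $n\mapsto L(e^n)$ ultimately monotonically increasing. For all sufficiently large $y$ define $\tilde g_1^*(y)=\frac{1}{2\beta}\log L(e^{2n-2})$, where $n\ge2$ is the integer with $n-1+\frac{1}{2\beta}\log L(e^{2n-2})\le y<n+\frac{1}{2\beta}\log L(e^{2n})$. Then for any $A>0$, \[ \tilde g_1^*(\log Ax)-\tilde g_1^*(\log x)\to0\qquad\text{as } x\to\infty. \] *)

(* Defs.v *)
From Stdlib Require Import Reals Lra ClassicalEpsilon.
From Coquelicot Require Import Coquelicot.
Open Scope R_scope.

Definition slowly_varying (L : R -> R) : Prop :=
  forall lam : R, 0 < lam ->
    is_lim (fun x => L (lam * x) / L x) p_infty (Finite 1).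

Definition ult_incr_exp (L : R -> R) : Prop :=
  exists N : nat, forall n : nat, (N <= n)%nat ->
    L (exp (INR n)) <= L (exp (INR (S n))).

Definition in_block (beta : R) (L : R -> R) (y : R) (n : nat) : Prop :=
  (2 <= n)%nat /\
  INR n - 1 + / (2 * beta) * ln (L (exp (2 * INR n - 2))) <= y /\
  y < INR n + / (2 * beta) * ln (L (exp (2 * INR n))).

(* the integer n of the definition (chosen by Hilbert's epsilon; for all
   sufficiently large y it exists and is unique) *)
Definition block_index (beta : R) (L : R -> R) (y : R) : nat :=
  epsilon (inhabits 0%nat) (in_block beta L y).

Definition gt1 (beta : R) (L : R -> R) (y : R) : R :=
  / (2 * beta) * ln (L (exp (2 * INR (block_index beta L y) - 2))).

(* Main.v *)
Require Import Defs.
From Stdlib Require Import Reals.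
From Coquelicot Require Import Coquelicot.
From Stdlib Require Import Lra Lia ZArith ClassicalEpsilon.
Open Scope R_scope.

Definition HH (beta : R) (L : R -> R) (k : nat) : R :=
  / (2 * beta) * ln (L (exp (2 * INR k))).

Lemma nat_unbounded (r : R) : exists n : nat, r < INR n.
Proof.
  destruct (archimed r) as [H1 _].
  destruct (Rle_or_lt r 0) as [Hr|Hr].
  - exists 1%nat. simpl. lra.
  - exists (Z.to_nat (up r)). rewrite INR_IZR_INZ. rewrite Z2Nat.id; [lra|].
    apply le_IZR. lra.
Qed.

Lemma two_INR (k : nat) : INR (2 * k) = 2 * INR k.
Proof. rewrite mult_INR. simpl. ring. Qed.

Lemma HH_mono1 beta L N (hbeta : 0 < beta) (hLpos : forall x, 0 < x -> 0 < L x)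
  (hN : forall n : nat, (N <= n)%nat -> L (exp (INR n)) <= L (exp (INR (S n)))) :
  forall k, (N <= k)%nat -> HH beta L k <= HH beta L (S k).
Proof.
  intros k hk. unfold HH.
  apply Rmult_le_compat_l.
  { apply Rlt_le, Rinv_0_lt_compat. lra. }
  apply ln_le. apply hLpos, exp_pos.
  assert (E1 : 2 * INR k = INR (2 * k)) by (rewrite two_INR; ring).
  assert (E2 : 2 * INR (S k) = INR (S (S (2 * k)))) by
    (rewrite !S_INR, two_INR; ring).
  rewrite E1, E2.
  eapply Rle_trans; apply hN; lia.
Qed.

Lemma HH_mono beta L N (hbeta : 0 < beta) (hLpos : forall x, 0 < x -> 0 < L x)
  (hN : forall n : nat, (N <= n)%nat -> L (exp (INR n)) <= L (exp (INR (S n)))) :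
  forall i d, (N <= i)%nat -> HH beta L i <= HH beta L (i + d).
Proof.
  intros i d hi. induction d.
  - rewrite Nat.add_0_r. lra.
  - rewrite Nat.add_succ_r. eapply Rle_trans; [apply IHd|].
    apply (HH_mono1 beta L N); auto. lia.
Qed.

Lemma HH_step beta L (hbeta : 0 < beta) (hLpos : forall x, 0 < x -> 0 < L x)
  (hLsv : slowly_varying L) :
  forall eps, 0 < eps -> exists K : nat, forall k, (K <= k)%nat ->
    HH beta L (S k) - HH beta L k < eps.
Proof.
  intros eps heps.
  assert (hl := hLsv (exp 2) (exp_pos 2)).
  apply is_lim_spec in hl.
  assert (hd : 0 < exp (2 * beta * eps) - 1).
  { assert (exp 0 < exp (2 * beta * eps)) by (apply exp_increasing; nra).
    rewrite exp_0 in H. lra. }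
  destruct (hl (mkposreal _ hd)) as [M hM]. simpl in hM.
  destruct (nat_unbounded M) as [K hK].
  exists K. intros k hk.
  assert (hx : M < exp (2 * INR k)).
  { apply le_INR in hk.
    assert (INR k <= exp (INR k)).
    { pose proof (exp_ineq1_le (INR k)). lra. }
    assert (exp (INR k) <= exp (2 * INR k)).
    { apply exp_le_3 || idtac. destruct (Rle_lt_or_eq_dec _ _ (pos_INR k)) as [h|h].
      - apply Rlt_le, exp_increasing. lra.
      - rewrite <- h. replace (2*0) with 0 by ring. lra. }
    lra. }
  specialize (hM _ hx).
  apply Rabs_lt_between in hM.
  set (x := exp (2 * INR k)) in *.
  assert (hLx : 0 < L x) by (apply hLpos, exp_pos).
  assert (hLy : 0 < L (exp 2 * x)) by (apply hLpos; unfold x; apply Rmult_lt_0_compat; apply exp_pos).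
  assert (Er : L (exp (2 * INR (S k))) = L (exp 2 * x)).
  { unfold x. rewrite <- exp_plus, S_INR. f_equal. f_equal. ring. }
  unfold HH. rewrite Er. fold x.
  assert (hr : ln (L (exp 2 * x) / L x) < 2 * beta * eps).
  { apply exp_lt_inv. rewrite exp_ln.
    - lra.
    - apply Rdiv_lt_0_compat; auto. }
  rewrite ln_div in hr; auto.
  assert (hc : 0 < / (2 * beta)) by (apply Rinv_0_lt_compat; lra).
  replace eps with (/ (2 * beta) * (2 * beta * eps)) by (field; lra).
  rewrite <- Rmult_minus_distr_l.
  apply Rmult_lt_compat_l; auto.
Qed.

Lemma HH_tele beta L (hbeta : 0 < beta) (hLpos : forall x, 0 < x -> 0 < L x)
  (hLsv : slowly_varying L) :
  forall eps, 0 < eps -> forall D : nat, exists K : nat, forall i d,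
    (K <= i)%nat -> (d <= D)%nat -> HH beta L (i + d) - HH beta L i < eps.
Proof.
  intros eps heps D.
  assert (hD : 0 < INR D + 1) by (pose proof (pos_INR D); lra).
  destruct (HH_step beta L hbeta hLpos hLsv (eps / (INR D + 1))) as [K hK].
  { apply Rdiv_lt_0_compat; lra. }
  exists K. intros i d hi hd.
  assert (forall d, HH beta L (i + d) - HH beta L i <= INR d * (eps / (INR D + 1))).
  { intro e. induction e.
    - rewrite Nat.add_0_r. simpl. lra.
    - rewrite Nat.add_succ_r, S_INR. specialize (hK (i + e)%nat ltac:(lia)). lra. }
  eapply Rle_lt_trans; [apply H|].
  apply le_INR in hd.
  assert (INR d * (eps / (INR D + 1)) <= INR D * (eps / (INR D + 1))).
  { apply Rmult_le_compat_r; auto. apply Rlt_le, Rdiv_lt_0_compat; lra. }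
  assert (INR D * (eps / (INR D + 1)) < eps).
  { apply (Rmult_lt_reg_r (INR D + 1)); auto. field_simplify; lra. }
  lra.
Qed.

Lemma HH_bound beta L : forall M : nat, exists B, forall n, (n <= M)%nat -> INR n + HH beta L n <= B.
Proof.
  induction M.
  - exists (INR 0 + HH beta L 0). intros n hn. replace n with 0%nat by lia. lra.
  - destruct IHM as [B hB]. exists (Rmax B (INR (S M) + HH beta L (S M))).
    intros n hn. destruct (Nat.eq_dec n (S M)) as [->|hne].
    + apply Rmax_r.
    + eapply Rle_trans; [apply hB; lia| apply Rmax_l].
Qed.

Lemma in_block_S beta L y p :
  in_block beta L y (S p) <->
  ((1 <= p)%nat /\ INR p + HH beta L p <= y /\ y < INR (S p) + HH beta L (S p)).
Proof.
  unfold in_block, HH.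
  replace (2 * INR (S p) - 2) with (2 * INR p) by (rewrite S_INR; ring).
  rewrite S_INR. split; intros [h1 [h2 h3]]; repeat split; try lia; lra.
Qed.

Lemma gt1_S beta L y p : block_index beta L y = S p -> gt1 beta L y = HH beta L p.
Proof.
  intro h. unfold gt1, HH. rewrite h.
  replace (2 * INR (S p) - 2) with (2 * INR p) by (rewrite S_INR; ring). reflexivity.
Qed.

Lemma block_exists beta L N (hbeta : 0 < beta) (hLpos : forall x, 0 < x -> 0 < L x)
  (hN : forall n : nat, (N <= n)%nat -> L (exp (INR n)) <= L (exp (INR (S n)))) :
  forall y, INR (S N) + HH beta L (S N) <= y -> exists p, (S N <= p)%nat /\ in_block beta L y (S p).
Proof.
  intros y hy.
  set (p0 := S N) in *.
  assert (Hind : forall m, y < INR (p0 + m) + HH beta L (p0 + m) ->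
           exists p, (p0 <= p)%nat /\ INR p + HH beta L p <= y /\ y < INR (S p) + HH beta L (S p)).
  { induction m; intros hm.
    - rewrite Nat.add_0_r in hm. lra.
    - destruct (Rlt_or_le y (INR (p0 + m) + HH beta L (p0 + m))) as [h|h].
      + apply IHm, h.
      + exists (p0 + m)%nat. rewrite Nat.add_succ_r in hm. repeat split; auto; lia. }
  destruct (nat_unbounded (y - HH beta L p0)) as [m hm].
  assert (hmono := HH_mono beta L N hbeta hLpos hN p0 m ltac:(unfold p0; lia)).
  assert (INR m <= INR (p0 + m)) by (apply le_INR; lia).
  destruct (Hind m ltac:(lra)) as [p [h1 [h2 h3]]].
  exists p. split; auto. apply in_block_S. repeat split; auto. unfold p0 in h1. lia.
Qed.

Lemma block_dist beta L N (hbeta : 0 < beta) (hLpos : forall x, 0 < x -> 0 < L x)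
  (hN : forall n : nat, (N <= n)%nat -> L (exp (INR n)) <= L (exp (INR (S n)))) :
  forall p q y y', (N <= p)%nat -> (S p <= q)%nat ->
  INR q + HH beta L q <= y' -> y < INR (S p) + HH beta L (S p) ->
  INR q - INR p < 1 + (y' - y).
Proof.
  intros p q y y' hp hq h1 h2.
  assert (hm := HH_mono beta L N hbeta hLpos hN (S p) (q - S p) ltac:(lia)).
  replace (S p + (q - S p))%nat with q in hm by lia.
  rewrite S_INR in h2. lra.
Qed.

Lemma blk_of beta L y : (exists n, in_block beta L y n) ->
  exists p, block_index beta L y = S p /\ in_block beta L y (S p).
Proof.
  intro h. pose proof (epsilon_spec (inhabits 0%nat) (in_block beta L y) h) as hs.
  fold (block_index beta L y) in hs.
  destruct (block_index beta L y) as [|p] eqn:E.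
  - destruct hs as [h0 _]. lia.
  - exists p. auto.
Qed.

Theorem lemmaA2 (beta : R) (L : R -> R)
  (hbeta : 0 < beta)
  (hLpos : forall x : R, 0 < x -> 0 < L x)
  (hLsv : slowly_varying L)
  (hLinc : ult_incr_exp L)
  (A : R) (hA : 0 < A) :
  is_lim (fun x => gt1 beta L (ln (A * x)) - gt1 beta L (ln x)) p_infty (Finite 0).
Proof.
  destruct hLinc as [N hN].
  apply is_lim_spec. intro eps.
  set (a := ln A).
  destruct (nat_unbounded (Rabs a + 1)) as [D hD].
  destruct (HH_tele beta L hbeta hLpos hLsv eps (cond_pos eps) D) as [K hK].
  set (M := Nat.max (S N) K).
  destruct (HH_bound beta L M) as [B hB].
  set (Y0 := Rmax B (INR (S N) + HH beta L (S N)) + Rabs a + 1).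
  exists (exp Y0). intros x hx.
  assert (hx0 : 0 < x) by (pose proof (exp_pos Y0); lra).
  assert (hlx : Y0 < ln x).
  { rewrite <- (ln_exp Y0). apply ln_increasing; auto. apply exp_pos. }
  rewrite ln_mult; auto. fold a.
  set (y := ln x) in *. set (y' := a + y).
  assert (hB1 := Rmax_l B (INR (S N) + HH beta L (S N))).
  assert (hB2 := Rmax_r B (INR (S N) + HH beta L (S N))).
  assert (ha1 := Rle_abs a). assert (ha2 := Rle_abs (- a)). rewrite Rabs_Ropp in ha2.
  assert (hy : Rmax B (INR (S N) + HH beta L (S N)) + 1 <= y) by (unfold Y0 in hlx; lra).
  assert (hy' : Rmax B (INR (S N) + HH beta L (S N)) + 1 <= y') by (unfold y', Y0 in *; lra).
  assert (bigp : forall z p, B < z -> in_block beta L z (S p) -> (M <= p)%nat).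
  { intros z p hz hb. apply in_block_S in hb. destruct hb as [_ [_ h3]].
    destruct (le_lt_dec M p) as [h|h]; auto.
    specialize (hB (S p) h). lra. }
  destruct (blk_of beta L y) as [p [Ep Bp]].
  { destruct (block_exists beta L N hbeta hLpos hN y ltac:(lra)) as [p [_ hp]]. eauto. }
  destruct (blk_of beta L y') as [q [Eq Bq]].
  { destruct (block_exists beta L N hbeta hLpos hN y' ltac:(lra)) as [q [_ hq]]. eauto. }
  assert (hpM := bigp y p ltac:(lra) Bp).
  assert (hqM := bigp y' q ltac:(lra) Bq).
  rewrite (gt1_S _ _ _ _ Ep), (gt1_S _ _ _ _ Eq).
  apply in_block_S in Bp. apply in_block_S in Bq.
  destruct Bp as [_ [Bp1 Bp2]]. destruct Bq as [_ [Bq1 Bq2]].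
  rewrite Rminus_0_r.
  destruct (le_lt_dec p q) as [hpq|hpq].
  - assert (hd : (q - p <= D)%nat).
    { destruct (Nat.eq_dec p q) as [->|hne]; [lia|].
      pose proof (block_dist beta L N hbeta hLpos hN p q y y' ltac:(lia) ltac:(lia) Bq1 Bp2) as hdd.
      assert (INR (q - p) < INR D).
      { rewrite minus_INR by lia. unfold y' in hdd. lra. }
      apply INR_lt in H. lia. }
    specialize (hK p (q - p)%nat ltac:(lia) hd).
    assert (hm := HH_mono beta L N hbeta hLpos hN p (q - p) ltac:(lia)).
    replace (p + (q - p))%nat with q in * by lia.
    rewrite Rabs_right; lra.
  - assert (hd : (p - q <= D)%nat).
    { pose proof (block_dist beta L N hbeta hLpos hN q p y' y ltac:(lia) ltac:(lia) Bp1 Bq2) as hdd.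
      assert (INR (p - q) < INR D).
      { rewrite minus_INR by lia. unfold y' in hdd. lra. }
      apply INR_lt in H. lia. }
    specialize (hK q (p - q)%nat ltac:(lia) hd).
    assert (hm := HH_mono beta L N hbeta hLpos hN q (p - q) ltac:(lia)).
    replace (q + (p - q))%nat with p in * by lia.
    rewrite Rabs_left1; lra.
Qed.
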